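(* Let $\mathcal{X}$ be a finite set, $\mathcal{Y}$ a set with two elements, and $(X,Y)$ random variables on $\mathcal{X}\times\mathcal{Y}$ with joint distribution $P_{X,Y}$ which are not independent, so that $P_{X,Y}(x,y) = P_X(x)P_Y(y)\left(1+\varrho f^*(x)g^*(y)\right)$ for some $\varrho>0$, $f^*\in\mathcal{F}_{\mathcal{X}}$, $g^*:\mathcal{Y}\to\mathbb{R}$ with $\mathbb{E}[f^*(X)^2]=\mathbb{E}[g^*(Y)^2]=1$. Then for each (nonzero, finite-dimensional) subspace $\mathcal{G}$ of $\mathcal{F}_{\mathcal{X}}$, $$\mathrm{H}(\mathcal{G}) = \frac{\varrho^2}{2}\left\|\Pi(f^*;\mathcal{G})\right\|^2 = \max_{f\in\mathcal{G}}\mathrm{H}(f) = \mathrm{H}(\Pi(f^*;\mathcal{G})),$$ where the maximum is over (nonzero) one-dimensional features $f\in\mathcal{G}$.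
   Context: $\mathcal{F}_{\mathcal{X}}$ is the space of functions $\mathcal{X}\to\mathbb{R}$ with inner product $\langle f_1,f_2\rangle=\mathbb{E}_{P_X}[f_1(X)f_2(X)]$ and norm $\|f\|=\sqrt{\langle f,f\rangle}$; $\Pi(f;\mathcal{G}) = \arg\min_{h\in\mathcal{G}}\|h-f\|$. For $f:\mathcal{X}\to\mathbb{R}^d$, $\Lambda_f = \mathbb{E}[f(X)f^{\mathrm{T}}(X)]$, $\tilde f(x)=f(x)-\mathbb{E}[f(X)]$, and the H-score (for nonsingular $\Lambda_f$) is $\mathrm{H}(f) = \frac12\mathbb{E}\left[\left\|\mathbb{E}[\Lambda_f^{-1/2}\tilde f(X)\mid Y]\right\|^2\right]$. For a subspace $\mathcal{G}$, $\mathrm{H}(\mathcal{G})$ denotes $\mathrm{H}(f)$ for any $f$ whose components form a basis of $\mathcal{G}$; this does not depend on the choice of basis. *)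

(* Defs.v *)
From HB Require Import structures.
From mathcomp Require Import all_boot all_order all_algebra.
From mathcomp Require Import reals.
Set Implicit Arguments. Unset Strict Implicit. Unset Printing Implicit Defensive.
Import Order.TTheory GRing.Theory Num.Theory.
Local Open Scope ring_scope.

Section HScore.
Variables (R : realType) (X : finType).
(* joint pmf of (X,Y) with Y valued in the two-element set bool *)
Variable P : X -> bool -> R.

Definition PX (x : X) : R := \sum_(y : bool) P x y.
Definition PY (y : bool) : R := \sum_(x : X) P x y.

Definition EX (f : X -> R) : R := \sum_(x : X) PX x * f x.
Definition inner (f1 f2 : X -> R) : R := \sum_(x : X) PX x * (f1 x * f2 x).
Definition fnorm (f : X -> R) : R := Num.sqrt (inner f f).

(* a d-dimensional feature f : X -> R^d given by its components F i *)
Definition Lambda (d : nat) (F : 'I_d -> X -> R) : 'M[R]_d :=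
  \matrix_(i, j) inner (F i) (F j).
Definition condE (d : nat) (F : 'I_d -> X -> R) (y : bool) : 'cV[R]_d :=
  \col_i ((\sum_(x : X) P x y * (F i x - EX (F i))) / PY y).
(* H(f) = 1/2 E[ || Lambda^{-1/2} E[ftilde(X)|Y] ||^2 ]
        = 1/2 E[ E[ftilde|Y]^T Lambda^{-1} E[ftilde|Y] ] *)
Definition Hscore (d : nat) (F : 'I_d -> X -> R) : R :=
  2^-1 * \sum_(y : bool) PY y *
    ((condE F y)^T *m invmx (Lambda F) *m condE F y) ord0 ord0.

Definition H1 (f : X -> R) : R := Hscore (fun _ : 'I_1 => f).

Definition HG (G : {vspace {ffun X -> R^o}}) : R :=
  Hscore (fun i : 'I_(\dim G) => (fun x : X => (tnth (vbasis G) i) x : R)).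

End HScore.

(* Main.v *)
Require Import Defs.
From HB Require Import structures.
From mathcomp Require Import all_boot all_order all_algebra.
From mathcomp Require Import reals.
From mathcomp Require Import ring lra.
Import Order.TTheory GRing.Theory Num.Theory.
Local Open Scope ring_scope.

Section Aux.
Variables (R : realType) (X : finType) (P : X -> bool -> R).
Hypothesis PXpos : forall x, 0 < PX P x.

Lemma mss (a : R) : 0 <= a * a. Proof. by rewrite -expr2 sqr_ge0. Qed.

Lemma ffun_evalZ (k : R) (f : {ffun X -> R^o}) x : (k *: f) x = k * f x.
Proof. by rewrite ffunE. Qed.

Lemma innerC f g : inner P f g = inner P g f.
Proof. by apply: eq_bigr => x _; rewrite [f x * _]mulrC. Qed.

Lemma inner_ge0 f : 0 <= inner P f f.
Proof. apply: sumr_ge0 => x _; apply: mulr_ge0; [exact: ltW|exact: mss]. Qed.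

Lemma inner_eq0 f : inner P f f = 0 -> forall x, f x = 0.
Proof.
move=> H x; have /eqP := H; rewrite psumr_eq0 => [/allP /(_ x) |].
  rewrite mem_index_enum => /(_ isT) /eqP /eqP; rewrite mulf_eq0 (gt_eqF (PXpos x)) /=.
  by rewrite mulf_eq0 orbb => /eqP.
by move=> y _; apply: mulr_ge0; [exact: ltW|exact: mss].
Qed.

Lemma inner_suml n (c : 'I_n -> R) (F : 'I_n -> X -> R) g :
  inner P (fun x => \sum_i c i * F i x) g = \sum_i c i * inner P (F i) g.
Proof.
rewrite /inner; under eq_bigr do rewrite mulr_suml mulr_sumr.
rewrite exchange_big; apply: eq_bigr => i _; rewrite mulr_sumr.
by apply: eq_bigr => x _; ring.
Qed.

Lemma inner_quad e h t :
  inner P (fun x => e x + t * h x) (fun x => e x + t * h x)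
  = inner P e e + 2 * t * inner P e h + t ^+ 2 * inner P h h.
Proof.
rewrite /inner mulr_sumr mulr_sumr -!big_split /=; apply: eq_bigr => x _; ring.
Qed.


Variables (rho : R) (fs : X -> R) (gs : bool -> R).
Hypothesis sumPX : \sum_x PX P x = 1.
Hypothesis Efs : EX P fs = 0.
Hypothesis gsn : \sum_(y : bool) PY P y * gs y ^+ 2 = 1.
Hypothesis Pdec : forall x y, P x y = PX P x * PY P y * (1 + rho * fs x * gs y).

Lemma condE_eq d (F : 'I_d -> X -> R) y : PY P y != 0 ->
  condE P F y = (rho * gs y) *: \col_i inner P fs (F i).
Proof.
move=> Py; apply/matrixP => i j; rewrite !mxE.
set E := EX P (F i).
have -> : \sum_x P x y * (F i x - E) =
   PY P y * (\sum_x PX P x * (F i x - E)) + PY P y * rho * gs y * (\sum_x PX P x * (fs x * (F i x - E))).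
  rewrite !mulr_sumr -big_split /=; apply: eq_bigr => x _; rewrite Pdec; ring.
have -> : \sum_x PX P x * (F i x - E) = 0.
  under eq_bigr do rewrite mulrBr.
  by rewrite sumrB -mulr_suml sumPX mul1r subrr.
have -> : \sum_x PX P x * (fs x * (F i x - E)) = inner P fs (F i).
  rewrite /inner; under eq_bigr do rewrite mulrBr mulrBr.
  rewrite sumrB.
  have : E * EX P fs = 0 by rewrite Efs mulr0.
  rewrite /EX mulr_sumr => H0.
  have -> : \sum_i0 PX P i0 * (fs i0 * E) = E * \sum_x PX P x * fs x.
    by rewrite mulr_sumr; apply: eq_bigr => x _; ring.
  by rewrite mulr_sumr H0 subr0.
by field.
Qed.

Lemma Hscore_eq d (F : 'I_d -> X -> R) :
  Hscore P F = rho ^+ 2 / 2 *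
    (((\col_i inner P fs (F i))^T *m invmx (Lambda P F) *m \col_i inner P fs (F i)) ord0 ord0).
Proof.
set a := \col_i _; set M := invmx _; set q := (_ *m _ *m _) ord0 ord0.
rewrite /Hscore.
have -> : \sum_(y : bool) PY P y * ((condE P F y)^T *m M *m condE P F y) ord0 ord0
   = \sum_(y : bool) PY P y * gs y ^+ 2 * (rho ^+ 2 * q).
  apply: eq_bigr => y _.
  have [->|Py] := eqVneq (PY P y) 0; first by rewrite !mul0r.
  rewrite condE_eq // [(_ *: _)^T]linearZ /= -scalemxAl -scalemxAr -scalemxAl scalerA mxE -/q; ring.
by rewrite -mulr_suml gsn; field.
Qed.

Lemma inv11 f : invmx (Lambda P (fun _ : 'I_1 => f)) ord0 ord0 = (inner P f f)^-1.
Proof.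
set L := Lambda _ _.
have L00 : L ord0 ord0 = inner P f f by rewrite mxE.
have [c0|c0] := eqVneq (inner P f f) 0.
  have nu : L \notin unitmx by rewrite unitmxE det_mx11 L00 c0 unitr0.
  by rewrite invmx_out ?inE // L00 c0 invr0.
have u : L \in unitmx by rewrite unitmxE det_mx11 L00 unitfE.
have := mulmxV u; move/matrixP => /(_ ord0 ord0); rewrite !mxE big_ord1 L00 /= => H.
by rewrite -[LHS]mul1r -(mulVf c0) -mulrA H mulr1.
Qed.

Lemma H1_eq f : H1 P f = rho ^+ 2 / 2 * (inner P fs f ^+ 2 / inner P f f).
Proof.
rewrite /H1 Hscore_eq; congr (_ * _).
rewrite !mxE big_ord1 !mxE big_ord1 !mxE inv11; ring.
Qed.

Lemma quad_zero (c nn : R) : 0 <= nn -> (forall t, 0 <= 2 * t * c + t ^+ 2 * nn) -> c = 0.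
Proof.
move=> nn0 H; set k := (nn + 1)^-1.
have k0 : 0 < k by rewrite invr_gt0; lra.
have kn : k * nn <= 1.
  rewrite -(ler_pM2l (_ : 0 < nn + 1)); last lra.
  by rewrite mulrA mulrV ?unitfE; [lra | apply/lt0r_neq0; lra].
have := H (- c * k) => H2.
have H3 : c ^+ 2 * k <= 0 by nra.
have : c ^+ 2 = 0 by nra.
by move/eqP; rewrite sqrf_eq0 => /eqP.
Qed.

Lemma CS f g : inner P f g ^+ 2 <= inner P f f * inner P g g.
Proof.
have [g0|g0] := eqVneq (inner P g g) 0.
  have gz := inner_eq0 _ g0.
  have -> : inner P f g = 0 by apply: big1 => x _; rewrite gz !mulr0.
  by rewrite g0 mulr0 expr0n.
set t := - (inner P f g / inner P g g).
have H := inner_ge0 (fun x => f x + t * g x); rewrite inner_quad in H.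
have gp : 0 < inner P g g by rewrite lt_def g0 inner_ge0.
have E : inner P g g * (inner P f f + 2 * t * inner P f g + t ^+ 2 * inner P g g)
   = inner P f f * inner P g g - inner P f g ^+ 2 by rewrite /t; field.
have := mulr_ge0 (ltW gp) H; rewrite E; lra.
Qed.

Lemma inner_ext f f' g g' : (forall x, f x = f' x) -> (forall x, g x = g' x) ->
  inner P f g = inner P f' g'.
Proof. by move=> Hf Hg; apply: eq_bigr => x _; rewrite Hf Hg. Qed.

Lemma quad_eq n (F : 'I_n -> X -> R) (u : 'cV[R]_n) :
  (u^T *m Lambda P F *m u) ord0 ord0 =
  inner P (fun x => \sum_i u i ord0 * F i x) (fun x => \sum_i u i ord0 * F i x).
Proof.
rewrite inner_suml mxE; apply: eq_bigr => j _; rewrite !mxE mulrC; congr (_ * _).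
rewrite innerC inner_suml; apply: eq_bigr => i _; rewrite !mxE innerC.
by rewrite mulrC.
Qed.

Section Sub.
Variable G : {vspace {ffun X -> R^o}}.
Let n := \dim G.
Let b (i : 'I_n) : X -> R := fun x => tnth (vbasis G) i x.

Lemma b_free (u : 'cV[R]_n) : (forall x, \sum_i u i ord0 * b i x = 0) -> u = 0.
Proof.
move=> H.
have Hs : \sum_(i < n) u i ord0 *: (vbasis G)`_i = 0.
  apply/ffunP => x; transitivity (\sum_i u i ord0 * b i x); last by rewrite H ffunE.
  rewrite sum_ffunE; apply: eq_bigr => i _.
  by rewrite ffun_evalZ /b (tnth_nth 0).
move/freeP: (basis_free (vbasisP G)) => Hf; have := Hf (fun i => u i ord0) Hs.
by move=> Hz; apply/matrixP => i j; rewrite ord1 mxE Hz.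
Qed.

Lemma Lambda_unit : Lambda P b \in unitmx.
Proof.
rewrite -row_free_unit -kermx_eq0; apply/eqP/row_matrixP => i; rewrite row0.
set r := row i _.
have rL : r *m Lambda P b = 0 by rewrite /r -row_mul mulmx_ker row0.
have := quad_eq _ b r^T; rewrite trmxK rL mul0mx mxE => /esym /inner_eq0 Hw.
by rewrite -[r]trmxK (b_free _ Hw) trmx0.
Qed.

Lemma HG_eq p : p \in G -> (forall i, inner P fs (b i) = inner P (fun x => p x) (b i)) ->
  HG P G = rho ^+ 2 / 2 * inner P (fun x => p x) (fun x => p x).
Proof.
move=> pG Hfs.
set c : 'cV[R]_n := \col_i coord (vbasis G) i p.
have pE x : p x = \sum_i c i ord0 * b i x.
  rewrite {1}(coord_vbasis pG) sum_ffunE; apply: eq_bigr => i _.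
  by rewrite ffun_evalZ /b (tnth_nth 0) mxE.
rewrite /HG Hscore_eq -/b; congr (_ * _).
set L := Lambda P b.
have LT : L^T = L by apply/matrixP => i j; rewrite !mxE innerC.
have aE : \col_i inner P fs (b i) = L *m c.
  apply/matrixP => i j; rewrite ord1 !mxE Hfs innerC (@inner_ext (b i) (b i) _ (fun x => \sum_i c i ord0 * b i x)) //.
  rewrite innerC inner_suml; apply: eq_bigr => k _; rewrite !mxE innerC mulrC.
  by [].
rewrite aE trmx_mul LT -!mulmxA (mulmxA L) (mulmxV Lambda_unit) mul1mx mulmxA.
by rewrite quad_eq; apply: inner_ext => x; rewrite pE.
Qed.
End Sub.
End Aux.

Theorem proposition3 (R : realType) (X : finType) (P : X -> bool -> R)
  (rho : R) (fs : X -> R) (gs : bool -> R) (G : {vspace {ffun X -> R^o}}) :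
  (forall x y, 0 <= P x y) ->
  \sum_(x : X) \sum_(y : bool) P x y = 1 ->
  (forall x, 0 < PX P x) ->
  (exists x y, P x y != PX P x * PY P y) ->
  0 < rho ->
  EX P (fun x => fs x ^+ 2) = 1 ->
  \sum_(y : bool) PY P y * gs y ^+ 2 = 1 ->
  (forall x y, P x y = PX P x * PY P y * (1 + rho * fs x * gs y)) ->
  G != 0%VS ->
  forall p : {ffun X -> R^o},
    p \in G ->
    (forall h : {ffun X -> R^o}, h \in G ->
       fnorm P (fun x => (p x : R) - fs x) <= fnorm P (fun x => (h x : R) - fs x)) ->
    let v := rho ^+ 2 / 2 * fnorm P (fun x => p x : R) ^+ 2 in
    [/\ HG P G = v,
        (forall f : {ffun X -> R^o}, f \in G -> f != 0 -> H1 P (fun x => f x : R) <= v),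
        (exists2 f : {ffun X -> R^o}, (f \in G) && (f != 0) & H1 P (fun x => f x : R) = v)
      & H1 P (fun x => p x : R) = v].
Proof.
move=> P0 sum1 PXpos _ rho0 _ gsn Pdec G0 p pG pmin v.
have sumPX : \sum_x PX P x = 1 by [].
have Efs : EX P fs = 0.
  have Hy y : PY P y * rho * gs y * EX P fs = 0.
    have E1 : PY P y = \sum_x P x y by [].
    have E2 : \sum_x P x y = PY P y * (\sum_x PX P x) + PY P y * rho * gs y * EX P fs.
      rewrite /EX !mulr_sumr -big_split /=; apply: eq_bigr => x _; rewrite Pdec; ring.
    move: E2; rewrite -E1 sumPX mulr1 => E2; lra.
  have : \sum_(y : bool) (PY P y * rho * gs y * EX P fs) * gs y = 0.
    by apply: big1 => y _; rewrite Hy mul0r.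
  have -> : \sum_(y : bool) (PY P y * rho * gs y * EX P fs) * gs y
           = rho * EX P fs * \sum_(y : bool) PY P y * gs y ^+ 2.
    by rewrite mulr_sumr; apply: eq_bigr => y _; ring.
  rewrite gsn mulr1 => /eqP; rewrite mulf_eq0 (gt_eqF rho0) /= => /eqP //.
pose pf := fun x => p x : R.
have orth h : h \in G -> inner P fs (fun x => h x) = inner P pf (fun x => h x).
  move=> hG.
  have Hc : inner P (fun x => pf x - fs x) (fun x => h x) = 0.
    apply: (quad_zero _ _ _ (inner_ge0 _ _ _ PXpos (fun x => h x))) => t.
    have hG' : p + t *: h \in G by rewrite memvD // memvZ.
    have := pmin _ hG'; rewrite /fnorm ler_sqrt; last exact: (inner_ge0 _ _ _ PXpos).
    rewrite (@inner_ext _ _ P (fun x => (p + t *: h) x - fs x) (fun x => (pf x - fs x) + t * h x)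
       (fun x => (p + t *: h) x - fs x) (fun x => (pf x - fs x) + t * h x)); last first.
    - by move=> x; rewrite !ffunE /pf addrAC.
    - by move=> x; rewrite !ffunE /pf addrAC.
    rewrite inner_quad /pf; lra.
  have E : inner P (fun x => pf x - fs x) (fun x => h x) = inner P pf (fun x => h x) - inner P fs (fun x => h x).
    by rewrite /inner -sumrB; apply: eq_bigr => x _; ring.
  lra.
have pp0 := inner_ge0 _ _ _ PXpos pf.
have vE : v = rho ^+ 2 / 2 * inner P pf pf by rewrite /v /fnorm sqr_sqrtr.
have H1E f : H1 P (fun x => f x : R) = rho ^+ 2 / 2 * (inner P fs (fun x => f x) ^+ 2 / inner P (fun x => f x) (fun x => f x)).
  exact: (H1_eq _ _ _ _ _ _ sumPX Efs gsn Pdec).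
have Hp : H1 P pf = v.
  rewrite H1E orth // vE; congr (_ * _).
  have [->|pn] := eqVneq (inner P pf pf) 0; first by rewrite expr0n /= mul0r.
  by field.
have Hle f : f \in G -> f != 0 -> H1 P (fun x => f x : R) <= v.
  move=> fG fn; rewrite H1E orth // vE.
  have ff0 : inner P (fun x => f x) (fun x => f x) != 0.
    apply: contra fn => /eqP /(inner_eq0 _ _ _ PXpos) H; apply/eqP/ffunP => x; rewrite H ffunE //.
  have ffp : 0 < inner P (fun x => f x) (fun x => f x) by rewrite lt_def ff0 inner_ge0.
  have rp : 0 <= rho ^+ 2 / 2 by apply: divr_ge0; [exact: sqr_ge0| lra].
  apply: ler_wpM2l => //; rewrite ler_pdivrMr //.
  exact: (CS _ _ _ PXpos).
split => //.
- rewrite vE; apply: (HG_eq _ _ _ PXpos _ _ _ sumPX Efs gsn Pdec) => //.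
  by move=> i; apply: orth; apply: vbasis_mem; apply: mem_tnth.
- have [pz|pn] := eqVneq p 0.
    have vn : vpick G != 0 by rewrite vpick0.
    exists (vpick G); first by rewrite memv_pick vn.
    rewrite H1E orth ?memv_pick // vE.
    have -> : inner P pf (fun x => vpick G x) = 0 by apply: big1 => x _; rewrite /pf pz ffunE !mul0r mulr0.
    have -> : inner P pf pf = 0 by apply: big1 => x _; rewrite /pf pz ffunE !mul0r mulr0.
    by rewrite expr0n /= !mul0r mulr0.
  by exists p; [rewrite pG pn | exact: Hp].
Qed.
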